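(* Let $\pi:\mathfrak H\to\mathfrak H/\mathcal I\cong\Lambda$ be the augmentation. Then $\pi(\mathrm{Fitt}_{\mathfrak H}(\mathcal I))=\mathrm{Fitt}_\Lambda(I/I^2)\subseteq(\xi)$ as ideals of $\Lambda$.
   Context: Fix a prime $p\ge5$, an integer $N\ge1$ with $p\nmid N\varphi(N)$, $\omega$ the Teichmüller character, $\theta$ an even character of $(\mathbb Z/Np\mathbb Z)^\times$ with $\chi=\omega^{-1}\theta$, satisfying: (a) $\theta$ primitive of modulus $Np$; (b) if $\chi|_{(\mathbb Z/p)^\times}=1$ then $\chi|_{(\mathbb Z/N)^\times}(p)\ne1$; (c) if $N=1$ then $\theta\ne\omega^2$. $\Lambda=\mathbb Z_p[[\mathbb Z_{p,N}^\times]]_\theta$ with $\mathbb Z_{p,N}=\varprojlim\mathbb Z/Np^r$ (the component on which $(\mathbb Z/Np\mathbb Z)^\times$ acts via $\theta$). $X=\varprojlim_r\mathrm{Cl}(\mathbb Q(\zeta_{Np^r}))[p^\infty]$ as a module over $\mathbb Z_p[[\mathbb Z_{p,N}^\times]]\cong\mathbb Z_p[[\mathrm{Gal}(\mathbb Q(\zeta_{Np^\infty})/\mathbb Q)]]$; $X_\chi(1)$ is its $\chi$-eigenspace with $\gamma$ acting as $\kappa(\gamma)\gamma$ ($\kappa$ the cyclotomic character), a torsion $\Lambda$-module, and $\xi=\xi_\chi\in\Lambda$ generates its characteristic ideal. Hecke setup: $\mathfrak H$ (resp. $\mathfrak h$) is the localization at the Eisenstein maximal ideal of Hida's ordinary Hecke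 algebra acting on $\varprojlim_rH^1(Y_1(Np^r),\mathbb Z_p)^{\mathrm{ord}}_\theta$ (resp. $\varprojlim_rH^1(X_1(Np^r),\mathbb Z_p)^{\mathrm{ord}}_\theta$), where the subscript $\theta$ is the eigenspace for the diamond operators; $\mathcal I\subset\mathfrak H$ is the Eisenstein ideal and $I\subset\mathfrak h$ its image. Known facts used as standing input: $\mathfrak H,\mathfrak h$ are finite flat $\Lambda$-algebras; $\mathfrak H/\mathcal I\cong\Lambda$; $\mathfrak h/I\cong\Lambda/\xi$; the natural map $\mathcal I\to I$ is an isomorphism of $\mathfrak H$-modules; $I$ is a faithful $\mathfrak h$-module. $\mathrm{Fitt}$ denotes the (zeroth) Fitting ideal. *)

(* Defs.v *)
From mathcomp Require Import all_boot all_algebra.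
Set Implicit Arguments. Unset Strict Implicit. Unset Printing Implicit Defensive.
Import GRing.Theory.
Local Open Scope ring_scope.

(* g : 'I_n -> S is a generating family of the R-module A/B, where
   A ⊇ B are R-submodules of S and R acts on S through f : R -> S
   (i.e. r . s = f r * s). *)
Definition is_gen_family (R S : comRingType) (f : R -> S) (A B : S -> Prop)
    (n : nat) (g : 'I_n -> S) : Prop :=
  (forall i, A (g i)) /\
  (forall a, A a -> exists r : 'I_n -> R, B (a - \sum_(i < n) f (r i) * g i)).

Definition is_relation (R S : comRingType) (f : R -> S) (B : S -> Prop)
    (n : nat) (g : 'I_n -> S) (r : 'I_n -> R) : Prop :=
  B (\sum_(i < n) f (r i) * g i).

(* Zeroth Fitting ideal of the (finitely generated) R-module A/B:
   the ideal of R generated by the determinants of n x n matrices whose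
   rows are relations among n generators.  (Independent of the chosen
   generating family; we take the union over all of them.) *)
Definition Fitt (R S : comRingType) (f : R -> S) (A B : S -> Prop) : R -> Prop :=
  fun x => exists (n : nat) (g : 'I_n -> S), is_gen_family f A B g /\
    exists (m : nat) (c : 'I_m -> R) (M : 'I_m -> 'M[R]_n),
      (forall k i, is_relation f B g (fun j => M k i j)) /\
      x = \sum_(k < m) c k * \det (M k).

Definition ideal_prod (S : comRingType) (A B : S -> Prop) : S -> Prop :=
  fun y => exists (m : nat) (a b : 'I_m -> S),
    (forall k, A (a k) /\ B (b k)) /\ y = \sum_(k < m) a k * b k.

Definition zero_set (S : comRingType) : S -> Prop := fun y => y = 0.

(* Main.v *)
Require Import Defs.
From mathcomp Require Import all_boot all_algebra.
From Stdlib Require Import ClassicalEpsilon FunctionalExtensionality.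
Set Implicit Arguments. Unset Strict Implicit. Unset Printing Implicit Defensive.
Import GRing.Theory.
Local Open Scope ring_scope.

Lemma fin_choice (T : Type) n (P : 'I_n -> T -> Prop) :
  (forall i, exists y, P i y) -> exists f : 'I_n -> T, forall i, P i (f i).
Proof.
move=> HP.
exists (fun i => proj1_sig (constructive_indefinite_description _ (HP i))).
move=> i; exact: proj2_sig (constructive_indefinite_description _ (HP i)).
Qed.



Lemma I2_of (Lam H h : comRingType) (pi : {rmorphism H -> Lam}) (phi : {rmorphism H -> h})
  n (t g : 'I_n -> H) : (forall i, pi (t i) = 0) -> (forall i, pi (g i) = 0) ->
  ideal_prod (fun y => exists x, pi x = 0 /\ phi x = y)
             (fun y => exists x, pi x = 0 /\ phi x = y)
             (\sum_i phi (t i) * phi (g i)).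
Proof.
move=> ht hg; exists n, (fun i => phi (t i)), (fun i => phi (g i)); split=> //.
by move=> k; split; [exists (t k) | exists (g k)].
Qed.

Lemma lift_I2 (Lam H h : comRingType) (pi : {rmorphism H -> Lam}) (phi : {rmorphism H -> h})
  (hinj : forall x, pi x = 0 -> phi x = 0 -> x = 0)
  m (e : 'I_m -> H)
  (he : forall a, pi a = 0 -> exists r : 'I_m -> H, a - \sum_i r i * e i = 0)
  (x : H) : pi x = 0 ->
  ideal_prod (fun y => exists x, pi x = 0 /\ phi x = y)
             (fun y => exists x, pi x = 0 /\ phi x = y) (phi x) ->
  exists t : 'I_m -> H, (forall j, pi (t j) = 0) /\ x = \sum_j t j * e j.
Proof.
move=> hx [K [a [b [hab hxab]]]].
have [a' ha'] := fin_choice (fun k => (hab k).1).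
have [b' hb'] := fin_choice (fun k => (hab k).2).
have [s hs] := fin_choice (fun k => he _ (hb' k).1).
exists (fun j => \sum_k a' k * s k j); split.
  by move=> j; rewrite rmorph_sum big1 // => k _; rewrite rmorphM (ha' k).1 mul0r.
have -> : x = \sum_k a' k * b' k.
  apply/eqP; rewrite -subr_eq0; apply/eqP; apply: hinj.
    by rewrite rmorphB rmorph_sum hx big1 ?subr0 // => k _; rewrite rmorphM (ha' k).1 mul0r.
  rewrite rmorphB rmorph_sum hxab; apply/eqP; rewrite subr_eq0; apply/eqP.
  by apply: eq_bigr => k _; rewrite rmorphM (ha' k).2 (hb' k).2.
have hb k : b' k = \sum_j s k j * e j by apply/eqP; rewrite -subr_eq0; apply/eqP; exact: hs.
under eq_bigr => k _ do rewrite hb big_distrr.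
rewrite exchange_big /=; apply: eq_bigr => j _.
by rewrite mulr_suml; apply: eq_bigr => k _; rewrite mulrA.
Qed.


Lemma det_ann (Lam H h : comRingType) (pi : {rmorphism H -> Lam}) (phi : {rmorphism H -> h})
  (hfaith : forall y : h, (forall z, (exists x, pi x = 0 /\ phi x = z) -> y * z = 0) -> y = 0)
  k (G : 'I_k -> H)
  (hG : forall a, pi a = 0 -> exists r : 'I_k -> H, a - \sum_i r i * G i = 0)
  (M : 'M[H]_k) (hM : forall i, \sum_j M i j * G j = 0) : phi (\det M) = 0.
Proof.
have hMG : M *m (\col_j G j) = 0.
  apply/matrixP => i l; rewrite !mxE; under eq_bigr => j _ do rewrite mxE; exact: hM.
have hd j : \det M * G j = 0.
  have := congr1 (mulmx (\adj M)) hMG.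
  move/matrixP/(_ j ord0).
  by rewrite mulmxA mul_adj_mx mul_scalar_mx mulmx0 !mxE.
apply: hfaith => z [x [hx <-]].
have [r hr] := hG x hx.
have -> : x = \sum_i r i * G i by apply/eqP; rewrite -subr_eq0; apply/eqP.
rewrite -rmorphM mulr_sumr big1 ?rmorph0 // => i _.
by rewrite mulrCA hd mulr0.
Qed.


Lemma build (Lam H h : comRingType) (iota : {rmorphism Lam -> H})
  (pi : {rmorphism H -> Lam}) (phi : {rmorphism H -> h})
  (hpi : forall l, pi (iota l) = l)
  (hinj : forall x, pi x = 0 -> phi x = 0 -> x = 0)
  m (e : 'I_m -> H) (he0 : forall j, pi (e j) = 0)
  (he : forall a, pi a = 0 -> exists r : 'I_m -> H, a - \sum_i r i * e i = 0)
  n (g' : 'I_n -> h) (hg1 : forall i, exists x, pi x = 0 /\ phi x = g' i)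
  (hg2 : forall a, (exists x, pi x = 0 /\ phi x = a) -> exists r : 'I_n -> Lam,
     ideal_prod (fun y => exists x, pi x = 0 /\ phi x = y)
                (fun y => exists x, pi x = 0 /\ phi x = y)
                (a - \sum_i phi (iota (r i)) * g' i)) :
  exists G : 'I_(n + m) -> H, (forall k, pi (G k) = 0) /\
    (forall a, pi a = 0 -> exists r, a - \sum_k r k * G k = 0) /\
    forall N : 'M[Lam]_n,
      (forall i, ideal_prod (fun y => exists x, pi x = 0 /\ phi x = y)
                (fun y => exists x, pi x = 0 /\ phi x = y)
                (\sum_j phi (iota (N i j)) * g' j)) ->
      exists M : 'M[H]_(n + m), (forall i, \sum_j M i j * G j = 0) /\
        pi (\det M) = \det N.
Proof.
have [g hg] := fin_choice hg1.
pose Gu : 'cV[H]_n := \col_i g i.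
pose Gd : 'cV[H]_m := \col_j e j.
pose Gc := col_mx Gu Gd.
exists (fun k => Gc k ord0); split.
  move=> k; rewrite -[k](@splitK n m); case: (split k) => [i|j] /=.
    by rewrite col_mxEu mxE (hg i).1.
  by rewrite col_mxEd mxE he0.
split.
  move=> a ha; have [r hr] := he a ha.
  exists (fun k => (col_mx (0 : 'cV[H]_n) (\col_j r j)) k ord0).
  rewrite big_split_ord /= big1 ?add0r; last by move=> i _; rewrite !col_mxEu mxE mul0r.
  by under eq_bigr => j _ do rewrite !col_mxEd !mxE.
move=> N hN.
have hup i : exists t : 'I_m -> H, (forall j, pi (t j) = 0) /\
    \sum_j iota (N i j) * g j = \sum_k t k * e k.
  apply: (lift_I2 hinj he).
    by rewrite rmorph_sum big1 // => j _; rewrite rmorphM hpi (hg j).1 mulr0.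
  rewrite rmorph_sum; under eq_bigr => j _ do rewrite rmorphM (hg j).2.
  exact: hN.
have [T1 hT1] := fin_choice hup.
have hlo j : exists p : ('I_n -> Lam) * ('I_m -> H), (forall k, pi (p.2 k) = 0) /\
    e j - \sum_i iota (p.1 i) * g i = \sum_k p.2 k * e k.
  have [r hr] := hg2 (phi (e j)) (ex_intro _ (e j) (conj (he0 j) erefl)).
  have h1 : pi (e j - \sum_i iota (r i) * g i) = 0.
    rewrite rmorphB rmorph_sum he0 big1 ?subr0 // => i _.
    by rewrite rmorphM (hg i).1 mulr0.
  have h2 : ideal_prod (fun y => exists x, pi x = 0 /\ phi x = y)
                (fun y => exists x, pi x = 0 /\ phi x = y)
                (phi (e j - \sum_i iota (r i) * g i)).
    rewrite rmorphB rmorph_sum; under eq_bigr => i _ do rewrite rmorphM (hg i).2.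
    exact: hr.
  have [t [ht1 ht2]] := lift_I2 hinj he h1 h2.
  by exists (r, t).
have [P hP] := fin_choice hlo.
pose T1m : 'M[H]_(n, m) := \matrix_(i, k) T1 i k.
pose Sm : 'M[H]_(m, n) := \matrix_(j, i) iota ((P j).1 i).
pose T2m : 'M[H]_m := \matrix_(j, k) (P j).2 k.
pose M := block_mx (map_mx iota N) (- T1m) (- Sm) (1%:M - T2m).
exists M; split.
  have hMG : M *m Gc = 0.
    rewrite mul_block_col -(col_mx0 _ n m 1); congr col_mx.
      rewrite mulNmx; apply/eqP; rewrite subr_eq0; apply/eqP.
      apply/matrixP => i l; rewrite !mxE.
      under eq_bigr => j _ do rewrite !mxE.
      under [in RHS]eq_bigr => j _ do rewrite !mxE.
      exact: (hT1 i).2.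
    have E : Gd = Sm *m Gu + T2m *m Gd.
      apply/matrixP => j l; rewrite !mxE.
      under eq_bigr => i _ do rewrite !mxE.
      under [in X in _ = _ + X]eq_bigr => i _ do rewrite !mxE.
      by rewrite -(hP j).2 addrC subrK.
    by rewrite mulNmx mulmxBl mul1mx [X in - _ + (X - _)]E addrK addNr.
  move=> i; move/matrixP: hMG => /(_ i ord0).
  rewrite mxE => ->; by rewrite mxE.
rewrite -det_map_mx map_block_mx.
have e1 : map_mx pi (map_mx iota N) = N by apply/matrixP => i j; rewrite !mxE hpi.
have e2 : map_mx pi (- T1m) = 0.
  by apply/matrixP => i j; rewrite !mxE rmorphN (hT1 i).1 oppr0.
have e4 : map_mx pi (1%:M - T2m) = 1%:M.
  apply/matrixP => i j; rewrite !mxE rmorphB (hP i).1 subr0.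
  by rewrite rmorphMn rmorph1.
by rewrite e1 e2 e4 det_lblock det1 mulr1.
Qed.


Theorem mainTheorem6 (Lam H h : comRingType) (xi : Lam)
    (iota : {rmorphism Lam -> H})   (* Lambda-algebra structure of H *)
    (pi : {rmorphism H -> Lam})     (* augmentation H -> H/cI = Lambda *)
    (phi : {rmorphism H -> h}) :    (* natural surjection H -> h *)
  (forall l, pi (iota l) = l) ->
  (forall y : h, exists x : H, phi x = y) ->
  let cI : H -> Prop := fun x => pi x = 0 in
  let I : h -> Prop := fun y => exists x, cI x /\ phi x = y in
  (* cI -> I is an isomorphism of H-modules *)
  (forall x, cI x -> phi x = 0 -> x = 0) ->
  (* h/I = Lambda/(xi) as Lambda-algebras *)
  (forall l : Lam, I (phi (iota l)) <-> exists c, l = xi * c) ->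
  (* I is a faithful h-module *)
  (forall y : h, (forall z, I z -> y * z = 0) -> y = 0) ->
  (* cI is a finitely generated ideal of H *)
  (exists (n : nat) (g : 'I_n -> H), is_gen_family (fun x : H => x) cI (@zero_set H) g) ->
  (forall l : Lam,
     (exists x, Fitt (fun x : H => x) cI (@zero_set H) x /\ pi x = l) <->
     Fitt (fun a : Lam => phi (iota a)) I (ideal_prod I I) l) /\
  (forall l : Lam, Fitt (fun a : Lam => phi (iota a)) I (ideal_prod I I) l ->
     exists c, l = xi * c).
Proof.
move=> hpi _ cI I hinj hxi hfaith [m [e [he0 he]]].
rewrite /I /cI in hxi hfaith *; rewrite /cI in hinj he0 he.
split.
  move=> l; split.
    move=> [x [[n [g [[hg hgen] [mm [c [M [hM ->]]]]]]] <-]].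
    exists n, (fun i => phi (g i)); split.
      split; first by move=> i; exists (g i).
      move=> a [x0 [hx0 <-]]; have [s hs] := hgen x0 hx0.
      exists (fun i => pi (s i)).
      have -> : x0 = \sum_i s i * g i by apply/eqP; rewrite -subr_eq0; apply/eqP.
      have -> : phi (\sum_i s i * g i) - \sum_i phi (iota (pi (s i))) * phi (g i)
             = \sum_i phi (s i - iota (pi (s i))) * phi (g i).
        by rewrite rmorph_sum -sumrB; apply: eq_bigr => i _; rewrite rmorphM rmorphB mulrBl.
      apply: I2_of => // i; by rewrite rmorphB hpi subrr.
    exists mm, (fun k => pi (c k)), (fun k => map_mx pi (M k)); split.
      move=> k i; rewrite /is_relation.
      have -> : \sum_j phi (iota ((map_mx pi (M k)) i j)) * phi (g j)
             = \sum_j phi (iota (pi (M k i j)) - M k i j) * phi (g j)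
               + phi (\sum_j M k i j * g j).
        rewrite rmorph_sum -big_split; apply: eq_bigr => j _.
        by rewrite mxE rmorphB !rmorphM mulrBl /= subrK.
      rewrite (hM k i) rmorph0 addr0.
      apply: I2_of => // j; by rewrite rmorphB hpi subrr.
    by rewrite rmorph_sum; apply: eq_bigr => k _; rewrite rmorphM det_map_mx.
  move=> [n [g' [[hg1 hg2] [mm [c [N [hN ->]]]]]]].
  have [G [hG0 [hG hGN]]] := build hpi hinj he0 he hg1 hg2.
  have [Mf hMf] := fin_choice (fun k => hGN (N k) (hN k)).
  exists (\sum_k iota (c k) * \det (Mf k)); split.
    exists (n + m), G; split; first by split.
    by exists mm, (fun k => iota (c k)), Mf; split => // k i; exact: (hMf k).1.
  by rewrite rmorph_sum; apply: eq_bigr => k _; rewrite rmorphM hpi (hMf k).2.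
move=> l [n [g' [[hg1 hg2] [mm [c [N [hN ->]]]]]]].
have [G [hG0 [hG hGN]]] := build hpi hinj he0 he hg1 hg2.
have hk k : exists w, \det (N k) = xi * w.
  have [M [hM hMd]] := hGN (N k) (hN k).
  have hphi := det_ann hfaith hG hM.
  apply/hxi; exists (iota (\det (N k)) - \det M); split.
    by rewrite rmorphB hpi hMd subrr.
  by rewrite rmorphB hphi subr0.
have [w hw] := fin_choice hk.
exists (\sum_k c k * w k); rewrite mulr_sumr; apply: eq_bigr => k _.
by rewrite hw mulrCA.
Qed.
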